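(* For every integer $k \geq 6$, there exists a stringent graph on $k$ vertices.
   Context: All graphs are finite and simple; $N(u)$ denotes the set of neighbours of a vertex $u$. A set $W\subseteq V(H)$ is homogeneous in $H$ if $N(u)\setminus W=N(v)\setminus W$ for every two distinct vertices $u,v\in W$. A graph $H$ is stringent if it contains no homogeneous set $W$ with $1<|W|\le|V(H)|-1$ and has no non-trivial automorphisms. *)

(* Defs.v *)
From mathcomp Require Import all_boot all_fingroup.
Set Implicit Arguments. Unset Strict Implicit. Unset Printing Implicit Defensive.

Definition simple_graph (T : finType) (e : rel T) : Prop :=
  symmetric e /\ irreflexive e.

Definition nbhd (T : finType) (e : rel T) (u : T) : {set T} := [set v | e u v].

Definition homogeneous (T : finType) (e : rel T) (W : {set T}) : Prop :=
  forall u v, u \in W -> v \in W -> u != v -> nbhd e u :\: W = nbhd e v :\: W.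

Definition is_automorphism (T : finType) (e : rel T) (s : {perm T}) : Prop :=
  forall u v, e (s u) (s v) = e u v.

Definition stringent (T : finType) (e : rel T) : Prop :=
  (forall W : {set T}, 1 < #|W| -> #|W| <= #|T| - 1 -> ~ homogeneous e W) /\
  (forall s : {perm T}, is_automorphism e s -> s = 1%g).

(* Main.v *)
Require Import Defs.
From mathcomp Require Import all_boot all_fingroup.
From mathcomp Require Import zify.
Definition E (x y : nat) : bool :=
  (x.+1 == y) || (y.+1 == x) || ((x == 1) && (y == 3)) || ((x == 3) && (y == 1)).

Lemma EP x y : E x y -> (x.+1 = y \/ y.+1 = x \/ (x = 1 /\ y = 3) \/ (x = 3 /\ y = 1)).
Proof. rewrite /E; lia. Qed.
Lemma ES x : E x x.+1. Proof. by rewrite /E eqxx. Qed.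
Lemma ES' x : E x.+1 x. Proof. by rewrite /E eqxx orbT. Qed.

Lemma Egt x y : x < y -> E x y -> y = x.+1 \/ (x = 1 /\ y = 3).
Proof. move=> h /EP; lia. Qed.
Lemma Elt x y : y < x -> E x y -> x = y.+1 \/ (x = 3 /\ y = 1).
Proof. move=> h /EP; lia. Qed.

Section Spread.
Variables (k : nat) (P : nat -> bool).
Hypothesis hk : 6 <= k.
Hypothesis clo : forall x y w, P x -> P y -> w < k -> ~~ P w -> E x w = E y w.

Lemma forceP x y w : P x -> P y -> w < k -> E x w != E y w -> P w.
Proof.
move=> hx hy hw hne; case: (boolP (P w)) => // hn.
by move: hne; rewrite (clo _ _ _ hx hy hw hn) eqxx.
Qed.

Lemma up j : j != 1 -> j + 2 < k -> P j -> P j.+1 -> P (j + 2).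
Proof. move=> h1 h2 a b; apply: (forceP _ _ (j+2) b a) => //; rewrite /E; lia. Qed.

Lemma dn j : j != 2 -> 1 <= j -> j + 1 < k -> P j -> P j.+1 -> P (j - 1).
Proof. move=> h1 h0 h2 a b; apply: (forceP _ _ (j-1) a b) => //; try lia; rewrite /E; lia. Qed.

Lemma from34 : P 3 -> P 4 -> forall m, m < k -> P m.
Proof.
move=> p3 p4.
have Q : forall n, 4 + n < k -> P (3 + n) && P (4 + n).
  elim=> [|n IH] h; first by rewrite p3 p4.
  have /andP[a b] := IH ltac:(lia).
  have e1 : 3 + n.+1 = 4 + n by lia.
  have e2 : 4 + n.+1 = 3 + n + 2 by lia.
  rewrite e2 e1 b /=.
  apply: up => //; try lia.
have p2 : P 2.
  have h : 3 + 1 < k by lia.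
  exact: (dn 3 isT isT h p3 p4).
have p1 : P 1.
  by apply: (forceP 2 4 1) => //; lia.
have p0 : P 0.
  have h : 1 + 1 < k by lia.
  exact: (dn 1 isT isT h p1 p2).
move=> m hm.
case: m hm => [|[|[|[|m]]]] hm //.
have h : 4 + m < k by lia.
have /andP[_ b] := Q m h.
by rewrite -(addn4 m) addnC.
Qed.

Lemma pair34 i : i.+1 < k -> P i -> P i.+1 -> P 3 && P 4.
Proof.
move=> hi a b.
case: (ltnP i 3) => hi3.
  case: i hi3 hi a b => [|[|[|//]]] _ hi a b.
  - have p2 : P 2 by apply: (up 0 isT) => //; lia.
    have p3 : P 3 by apply: (forceP 1 0 3 b a) => //; lia.
    have p4 : P 4 by apply: (up 2 isT) => //; lia.
    by rewrite p3 p4.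
  - have p0 : P 0 by apply: (dn 1 isT isT) => //; lia.
    have p3 : P 3 by apply: (forceP 1 0 3 a p0) => //; lia.
    have p4 : P 4 by apply: (up 2 isT) => //; lia.
    by rewrite p3 p4.
  - have p4 : P 4 by apply: (up 2 isT) => //; lia.
    by rewrite b p4.
have D : forall d, d <= i - 3 -> P (i - d) && P (i - d).+1.
  elim=> [|d IH] hd; first by rewrite subn0 a b.
  have /andP[x y] := IH ltac:(lia).
  have e1 : (i - d.+1).+1 = i - d by lia.
  have e2 : i - d.+1 = i - d - 1 by lia.
  rewrite e1 x andbT e2.
  apply: dn => //; lia.
have /andP[x y] := D (i - 3) (leqnn _).
have e1 : i - (i - 3) = 3 by lia.
by rewrite e1 in x y; rewrite x y.
Qed.

Lemma pairex u v : u < v -> v < k -> P u -> P v -> exists i, [/\ i.+1 < k, P i & P i.+1].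
Proof.
move=> uv vk pu pv.
case: (boolP (P u.+1)) => h1; first by exists u; split => //; lia.
case: (boolP (P v.-1)) => h2.
  exists v.-1; split => //; try lia.
  by have -> : v.-1.+1 = v by lia.
have uv2 : u.+1 < v.
  rewrite ltn_neqAle uv andbT; apply/eqP => e; by rewrite e pv in h1.
have uv3 : u < v.-1 by lia.
have uv4 : u < v.+1 by lia.
have uv5 : u.-1 < v by lia.
have uk : u.+1 < k by lia.
have v0 : 0 < v by lia.
have vk' : v.-1 < k by lia.
have c1 := clo u v u.+1 pu pv uk h1.
have c2 := clo u v v.-1 pu pv vk' h2.
have c3 : 0 < u -> E u u.-1 = E v u.-1 \/ exists i, [/\ i.+1 < k, P i & P i.+1].
  move=> u0; case: (boolP (P u.-1)) => h3.
    right; exists u.-1; rewrite (prednK u0); split => //.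
    exact: ltn_trans uv vk.
  by left; apply: clo => //; exact: leq_ltn_trans (leq_pred u) (ltn_trans uv vk).
have c4 : v.+1 < k -> E u v.+1 = E v v.+1 \/ exists i, [/\ i.+1 < k, P i & P i.+1].
  move=> vk1; case: (boolP (P v.+1)) => h3.
    by right; exists v.
  by left; apply: clo => //; lia.
have d1 : E v u.+1 by rewrite -c1 ES.
have d2 : E u v.-1.
  rewrite c2; move: (ES' v.-1); by rewrite (prednK v0).
move/Elt: d1 => /(_ uv2) d1; move/Egt: d2 => /(_ uv3) d2.
case: (posnP u) => u0; case: (ltnP v.+1 k) => vk1.
- case: (c4 vk1) => // c4'. exfalso.
  have d4 : E u v.+1 by rewrite c4' ES.
  move/Egt: d4 => /(_ uv4) d4; clear -d1 d2 d4 uv vk u0 vk1 hk; lia.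
- exfalso; clear -d1 d2 uv vk u0 vk1 hk; lia.
- case: (c4 vk1) => // c4'. case: (c3 u0) => // c3'.
  have d4 : E u v.+1 by rewrite c4' ES.
  have d3 : E v u.-1.
    rewrite -c3'; move: (ES' u.-1); by rewrite (prednK u0).
  move/Egt: d4 => /(_ uv4) d4; move/Elt: d3 => /(_ uv5) d3.
  exfalso; clear -d1 d2 d3 d4 uv vk u0 vk1 hk; lia.
- case: (c3 u0) => // c3'.
  have d3 : E v u.-1.
    rewrite -c3'; move: (ES' u.-1); by rewrite (prednK u0).
  move/Elt: d3 => /(_ uv5) d3.
  exfalso; clear -d1 d2 d3 uv vk u0 vk1 hk; lia.
Qed.

Lemma spread u v : u < v -> v < k -> P u -> P v -> forall m, m < k -> P m.
Proof.
move=> uv vk pu pv.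
have [i [hi a b]] := pairex u v uv vk pu pv.
have /andP[p3 p4] := pair34 i hi a b.
exact: from34.
Qed.
End Spread.

Lemma asym n (hn : 5 <= n) (s : {perm 'I_n.+1}) :
  (forall u v : 'I_n.+1, E (s u) (s v) = E u v) -> s = 1%g.
Proof.
move=> Hs.
pose f m := nat_of_ord (s (inord m)).
have Hf m : f m < n.+1 by apply: ltn_ord.
have HE a b : a < n.+1 -> b < n.+1 -> E (f a) (f b) = E a b.
  by move=> ha hb; rewrite /f Hs !inordK.
have Hinj a b : a < n.+1 -> b < n.+1 -> f a = f b -> a = b.
  move=> ha hb /val_inj/perm_inj/(congr1 (@nat_of_ord _)); by rewrite !inordK.
have Hsurj y : y < n.+1 -> exists2 a, a < n.+1 & f a = y.
  move=> hy; exists (nat_of_ord ((s^-1)%g (inord y))) => //.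
  by rewrite /f inord_val permKV inordK.
have leaf : forall y z, y < n.+1 -> z < n.+1 -> E (f 0) y -> E (f 0) z -> y = z.
  move=> y z hy hz; have [a ha <-] := Hsurj y hy; have [b hb <-] := Hsurj z hz.
  rewrite !HE // => h1 h2.
  have a1 : a = 1 by move/EP: h1; lia.
  have b1 : b = 1 by move/EP: h2; lia.
  by rewrite a1 b1.
have h01 : E (f 0) (f 1) by rewrite HE //; lia.
have h12 : E (f 1) (f 2) by rewrite HE //; lia.
have h13 : E (f 1) (f 3) by rewrite HE //; lia.
have h23 : E (f 2) (f 3) by rewrite HE //; lia.
have h34 : E (f 3) (f 4) by rewrite HE //; lia.
have f0 : f 0 = 0.
  have hx := Hf 0.
  case: (posnP (f 0)) => // x0.
  exfalso.
  case: (ltnP (f 0) n) => xn.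
    have a : E (f 0) (f 0).-1 by move: (ES' (f 0).-1); rewrite (prednK x0).
    have := leaf (f 0).-1 (f 0).+1 ltac:(lia) ltac:(lia) a (ES _); lia.
  have e0 : f 0 = n by lia.
  rewrite e0 in h01.
  have := Hf 1; have := Hf 2; have := Hf 3.
  move/EP: h01; move/EP: h12; move/EP: h13; move/EP: h23.
  clear -hn; lia.
have f1 : f 1 = 1 by move/EP: h01; rewrite f0; lia.
have f2 : f 2 = 2.
  have n20 : f 2 <> 0 by rewrite -f0 => /Hinj; lia.
  move/EP: h12; rewrite f1 => h12.
  case: (eqVneq (f 2) 3) => e23; last by lia.
  exfalso.
  have n30 : f 3 <> 0 by rewrite -f0 => /Hinj; lia.
  have n33 : f 3 <> 3 by rewrite -e23 => /Hinj; lia.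
  have n41 : f 4 <> 1 by rewrite -f1 => /Hinj; lia.
  have n43 : f 4 <> 3 by rewrite -e23 => /Hinj; lia.
  move/EP: h13; rewrite f1 => h13.
  have e32 : f 3 = 2 by lia.
  move/EP: h34; rewrite e32; lia.
have all : forall m j, j <= m.+2 -> j < n.+1 -> f j = j.
  elim=> [|m IH] j hj hjk.
    by case: j hj hjk => [|[|[|]]].
  case: (leqP j m.+2) => hjm; first exact: IH.
  have ej : j = m.+3 by lia.
  have gt : m.+2 < f j.
    rewrite ltnNge; apply/negP => le.
    have := IH (f j) le (Hf j) => /esym /Hinj; lia.
  have h : E (f m.+2) (f j) by rewrite HE ?ej ?ES //; lia.
  rewrite IH // in h; last lia.
  move/Egt: h => /(_ gt); lia.
apply/permP => x; rewrite perm1; apply/val_inj.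
have := all n (val x) (leqW (leqW (ltn_ord x))) (ltn_ord x).
by rewrite /f inord_val.
Qed.

Theorem lemma4p2 (k : nat) (hk : 6 <= k) :
  exists e : rel 'I_k, simple_graph e /\ stringent e.
Proof.
case: k hk => // n hn.
exists (fun x y : 'I_n.+1 => E x y).
split; [split|split].
- move=> x y; rewrite /E; lia.
- move=> x; rewrite /E; lia.
- move=> W h1 h2 Hh; rewrite card_ord in h2.
  pose P m := [exists o : 'I_n.+1, (nat_of_ord o == m) && (o \in W)].
  have clo : forall x y w, P x -> P y -> w < n.+1 -> ~~ P w -> E x w = E y w.
    move=> x y w /existsP[ox /andP[/eqP ex hx]] /existsP[oy /andP[/eqP ey hy]] hw hPw.
    have hwW : (Ordinal hw) \notin W.
      apply: contra hPw => h; apply/existsP; exists (Ordinal hw); by rewrite eqxx h.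
    case: (eqVneq ox oy) => [exy|nxy]; first by rewrite -ex -ey exy.
    have := Hh ox oy hx hy nxy => /setP/(_ (Ordinal hw)).
    by rewrite !inE hwW /= ex ey.
  have PW : forall o : 'I_n.+1, o \in W -> P o.
    by move=> o ho; apply/existsP; exists o; rewrite eqxx ho.
  have [x [y [hx hy nxy]]] := card_gt1P h1.
  have Hall : forall m, m < n.+1 -> P m.
    case: (ltngtP x y) => hxy.
    + exact: (@spread n.+1 P hn clo x y hxy (ltn_ord y) (PW _ hx) (PW _ hy)).
    + exact: (@spread n.+1 P hn clo y x hxy (ltn_ord x) (PW _ hy) (PW _ hx)).
    + by move: nxy; rewrite (val_inj hxy) eqxx.
  have : n.+1 <= #|W|.
    rewrite -{1}(card_ord n.+1) -cardsT; apply: subset_leq_card.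
    apply/subsetP => o _.
    have /existsP[o' /andP[/eqP e' h']] := Hall o (ltn_ord o).
    by have -> : o = o' by apply: val_inj.
  lia.
- by move=> s Hs; apply: (@asym n hn s).
Qed.
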